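(* Consider the genetic algorithm with adaptive population size (APGA) described in the context, with maximum lifetime parameter $MaxLT$ and an arbitrary initial population size $P(0)\ge 1$. Then for every generation $t \ge MaxLT$, $$P(t) \le 2\,MaxLT + 1.$$
   Context: APGA is a steady-state genetic algorithm in which every individual carries a remaining lifetime (RLT). Parameters: an initial population size $P(0)$ and lifetime bounds $1\le MinLT\le MaxLT$; every individual, whether in the initial population or newly created, is assigned at creation a lifetime (its initial RLT) which is a positive integer between $MinLT$ and $MaxLT$ (the assignment may depend on fitness, e.g. via a bi-linear rule, but never exceeds $MaxLT$). Generation $t\ge 1$ proceeds as follows, starting from the population at the end of generation $t-1$: (1) decrement by 1 the RLT of every member except the best (highest-fitness) member of the population; (2) select 2 individuals, apply crossover and mutation to obtain 2 offspring, evaluate them and insert them into the population; (3) remove from the population all members whose RLT equals 0; (4) assign lifetimes (RLT values) to the 2 new members. $P(t)$ denotes the population size at the end of generation $t$, and $P(0)$ the size of the initial population. *)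

(* Defs.v *)
From mathcomp Require Import all_boot all_order.
Set Implicit Arguments. Unset Strict Implicit. Unset Printing Implicit Defensive.
Import Order.TTheory.
Local Open Scope order_scope.

(* An individual is a pair (fitness, remaining lifetime RLT).
   A population is a sequence of individuals, kept in order of creation
   (new offspring are appended at the end, removal preserves order). *)
Section APGA.
Context {d : Order.disp_t} {T : orderType d}.

Definition indiv := (T * nat)%type.

(* Index of the best (highest-fitness) member; ties are broken in favour of
   the earliest member in the population (the oldest one). *)
Definition best_index (p : seq indiv) : nat :=
  find (fun x : indiv => all (fun y : indiv => y.1 <= x.1) p) p.

Definition decr_rlt (p : seq indiv) : seq indiv :=
  [seq (if ix.1 == best_index p then ix.2 else (ix.2.1, ix.2.2.-1))
  | ix <- zip (iota 0 (size p)) p].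

(* The two offspring have arbitrary
   fitness (selection/crossover/mutation are unconstrained) and receive
   lifetimes in [MinLT, MaxLT] (possibly depending on fitness). The
   offspring are not subject to the removal of step (3), since their RLT is
   only assigned in step (4). *)
Definition apga_step (MinLT MaxLT : nat) (p p' : seq indiv) : Prop :=
  exists (f1 f2 : T) (l1 l2 : nat),
    [/\ (MinLT <= l1 <= MaxLT)%N, (MinLT <= l2 <= MaxLT)%N &
        p' = [seq x <- decr_rlt p | x.2 != 0%N] ++ [:: (f1, l1); (f2, l2)]].

End APGA.

(* Main.v *)
Require Import Defs.
From mathcomp Require Import all_boot all_order.
From mathcomp Require Import zify.
Import Order.TTheory.

Section S.
Context {d : Order.disp_t} {T : orderType d} (M : nat).
Notation Z := ((T * nat) * nat)%type.

Definition R (x y : Z) : bool :=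
  if (y.1.1 <= x.1.1)%O then y.1.2 + minn x.2 y.2 <= M
  else x.1.2 + minn x.2 y.2 <= M.
Definition dec (z : Z) : Z := ((z.1.1, z.1.2.-1), z.2).
Definition gD (b : nat) (iz : nat * Z) : Z := if iz.1 == b then iz.2 else dec iz.2.
Definition D (zs : seq Z) :=
  map (gD (best_index (map fst zs))) (zip (iota 0 (size zs)) zs).
Definition keep (z : Z) := z.1.2 != 0.
Definition succ (z : Z) : Z := (z.1, z.2.+1).

Lemma fstD b m (zs : seq Z) :
  map fst (map (gD b) (zip (iota m (size zs)) zs)) =
  [seq (if ix.1 == b then ix.2 else (ix.2.1, ix.2.2.-1))
  | ix <- zip (iota m (size zs)) (map fst zs)].
Proof.
elim: zs m => //= z zs IH m; rewrite IH /gD /=; by case: ifP.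
Qed.

Lemma pw_filt (s : seq Z) :
  pairwise (fun x y => keep x ==> keep y ==> R (succ x) (succ y)) s ->
  pairwise R (map succ (filter keep s)).
Proof.
elim: s => //= x s IH /andP [Ha Hp].
case: ifP => kx /=; last exact: IH.
rewrite IH // andbT; apply/allP => w /mapP [y]; rewrite mem_filter => /andP [ky ys] ->.
by have := allP Ha y ys; rewrite kx ky.
Qed.

Lemma pwD (zs : seq Z) : pairwise R zs ->
  pairwise (fun x y => keep x ==> keep y ==> R (succ x) (succ y)) (D zs).
Proof.
case: zs => [|z0 zs0] //; move: (z0 :: zs0) => zs.
move=> /(pairwiseP z0) Hpw.
rewrite /D pairwise_map; apply/(pairwiseP (0, z0)) => i j.
rewrite !inE size_zip size_iota minnn => Hi Hj Hij.
have := Hpw i j Hi Hj Hij.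
rewrite !nth_zip ?size_iota // !nth_iota // !add0n.
set x := nth z0 zs i; set y := nth z0 zs j.
set b := best_index _.
have Pi : forall k, k < size zs -> k == b ->
    all (fun w : T * nat => (w.1 <= (nth z0 zs k).1.1)%O) (map fst zs).
  move=> k Hk /eqP kb.
  have hs : has (fun x : T * nat => all (fun y : T * nat => (y.1 <= x.1)%O) (map fst zs)) (map fst zs).
    by rewrite has_find size_map; move: Hk; rewrite kb.
  have := nth_find z0.1 hs; rewrite (nth_map z0); last by move: Hk; rewrite kb.
  by rewrite -/b in kb; rewrite kb.
have bj : (y.1.1 <= x.1.1)%O -> j != b.
  move=> le; apply/negP => jb.
  have := Pi j Hj jb => Hy.
  have : (fun x : T * nat => all (fun y : T * nat => (y.1 <= x.1)%O) (map fst zs))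
           (nth z0.1 (map fst zs) i).
    rewrite (nth_map z0) //; apply/allP => w wi.
    exact: le_trans (allP Hy w wi) le.
  have hib : i < best_index (map fst zs) by move: Hij; rewrite (eqP jb).
  move=> H; move: (before_find z0.1 hib); by rewrite H.
have bi : ~~ (y.1.1 <= x.1.1)%O -> i != b.
  move=> nle; apply/negP => ib.
  have := Pi i Hi ib => Hx.
  by have := allP Hx y.1 (map_f _ (mem_nth z0 Hj)); rewrite (negbTE nle).
rewrite /R /gD /= -/x -/y.
case: ifP => le.
  rewrite (negbTE (bj le)) /=; case: (i == b) => /=; rewrite le => H;
  apply/implyP => _; apply/implyP; rewrite /keep /dec /= => k; lia.
rewrite (negbTE (bi (negbT le))) /=; case: (j == b) => /=; rewrite le => H;
  apply/implyP; rewrite /keep /dec /= => k; apply/implyP => _; lia.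
Qed.

Lemma sndD b m (zs : seq Z) :
  map snd (map (gD b) (zip (iota m (size zs)) zs)) = map snd zs.
Proof. elim: zs m => //= z zs IH m; rewrite IH /gD /=; by case: ifP. Qed.

Lemma boundD b m (zs : seq Z) : all (fun z : Z => z.1.2 <= M) zs ->
  all (fun z : Z => z.1.2 <= M) (map (gD b) (zip (iota m (size zs)) zs)).
Proof.
elim: zs m => //= z zs IH m /andP [hz hs]; rewrite IH // andbT /gD /=.
case: ifP => _ //=; rewrite /dec /=; lia.
Qed.

Lemma count_filt (A : Type) (a p : pred A) (s : seq A) : count a (filter p s) <= count a s.
Proof. elim: s => //= x s IH; case: ifP => _ /=; case: (a x) => /=; lia. Qed.

Lemma count_split m (l : seq nat) :
  count (fun a => a < m.+1) l <= count (fun a => a < m) l + count (pred1 m) l.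
Proof.
elim: l => //= x l IH; case E1: (x < m.+1); case E2: (x < m); case E3: (x == m); rewrite /= ?E1 ?E2 ?E3 /=; move: E1 E2 E3; lia.
Qed.

Definition Inv t (zs : seq Z) := [/\ pairwise R zs, all (fun z : Z => 0 < z.1.2 <= M) zs &
  forall k, k < t -> count (pred1 k) (map snd zs) <= 2].

Lemma map_snd_succ (s : seq Z) : map snd (map succ s) = map S (map snd s).
Proof. by elim: s => //= x s ->. Qed.
Lemma map_fst_succ (s : seq Z) : map fst (map succ s) = map fst s.
Proof. by elim: s => //= x s ->. Qed.

Lemma step t zs f1 f2 l1 l2 : Inv t zs -> 0 < l1 <= M -> 0 < l2 <= M ->
  Inv t.+1 (map succ (filter keep (D zs)) ++ [:: ((f1, l1), 0); ((f2, l2), 0)]).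
Proof.
move=> [hp ha hc] h1 h2.
have hD : all (fun z : Z => z.1.2 <= M) (D zs).
  apply: boundD; apply/allP => z /(allP ha) /andP [] //.
split.
- rewrite pairwise_cat (pw_filt _ (pwD _ hp)) /=.
  apply/andP; split; last by rewrite /R /=; case: ifP; lia.
  apply/allP => x /mapP [w]; rewrite mem_filter => /andP [kw wD] ->.
  have := allP hD w wD; rewrite /R /= minn0; case: ifP; case: ifP; lia.
- rewrite all_cat /= h1 h2 !andbT; apply/allP => x /mapP [w].
  rewrite mem_filter => /andP [kw wD] ->; have := allP hD w wD.
  move: kw; rewrite /keep /=; lia.
- move=> k hk; rewrite map_cat count_cat map_snd_succ count_map.
  case: k hk => [|k] hk /=.
    rewrite (eq_count (a2 := pred0)) ?count_pred0 //.
  rewrite addn0 (eq_count (a2 := pred1 k)); last by move=> a /=; rewrite eqSS.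
  rewrite addn0 count_map; apply: leq_trans (count_filt _ _ _ _) _.
  by rewrite -count_map /D sndD; apply: hc; lia.
Qed.



Lemma old_le1 (s : seq Z) : pairwise R s ->
  all (fun z : Z => (0 < z.1.2) && (M <= z.2)) s -> size s <= 1.
Proof.
case: s => [|x [|y s]] //= /andP [/andP [hxy _] _] /and3P [/andP [hx1 hx2] /andP [hy1 hy2] _].
move: hxy; rewrite /R; case: ifP => _; lia.
Qed.

Lemma young (l : seq nat) t : (forall k, k < t -> count_mem k l <= 2) ->
  forall m, m <= t -> count (fun a => a < m) l <= 2 * m.
Proof.
move=> H; elim => [|m IH] hm.
  by rewrite (eq_count (a2 := pred0)) ?count_pred0.
apply: leq_trans (count_split m l) _.
have := IH (ltnW hm); have := H m hm; lia.
Qed.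

Lemma final t zs : Inv t zs -> M <= t -> size zs <= 2 * M + 1.
Proof.
move=> [hp ha hc] hM.
rewrite -(count_predC (fun z : Z => M <= z.2) zs).
have h1 : count (fun z : Z => M <= z.2) zs <= 1.
  rewrite -size_filter; apply: old_le1; first exact: pairwise_filter.
  rewrite all_filter; apply/allP => z zin /=; apply/implyP => h.
  by move: (allP ha z zin) => /andP [h0 _]; rewrite h0 h.
have h2 : count (predC (fun z : Z => M <= z.2)) zs <= 2 * M.
  rewrite (eq_count (a2 := preim snd (fun a => a < M))); last first.
    by move=> z /=; rewrite ltnNge.
  rewrite -count_map; apply: (@young _ t) => // k hk; exact: hc.
lia.
Qed.

Lemma base_pw (s : seq (T * nat)) : all (fun x : T * nat => x.2 <= M) s ->
  pairwise R (map (fun x => (x, 0)) s).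
Proof.
elim: s => //= x s IH /andP [hx hs]; rewrite IH // andbT all_map.
apply/allP => y ys /=; have := allP hs y ys; rewrite /R /=; case: ifP; lia.
Qed.

End S.

Theorem theorem2 (d : Order.disp_t) (T : orderType d) (MinLT MaxLT : nat)
    (pop : nat -> seq (T * nat)) :
  (1 <= MinLT <= MaxLT)%N ->
  (0 < size (pop 0))%N ->
  (forall x, x \in pop 0 -> (MinLT <= x.2 <= MaxLT)%N) ->
  (forall t, apga_step MinLT MaxLT (pop t) (pop t.+1)) ->
  forall t, (MaxLT <= t)%N -> (size (pop t) <= 2 * MaxLT + 1)%N.
Proof.
move=> hM h0 hinit hstep.
have ex : forall t, exists zs, pop t = map fst zs /\ Inv MaxLT t zs.
  elim => [|t [zs [ep iv]]].
    exists (map (fun x => (x, 0)) (pop 0)); split.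
      by elim: (pop 0) => //= x s <-.
    split.
    - apply: base_pw; apply/allP => x xin; by case/andP: (hinit x xin).
    - rewrite all_map; apply/allP => x xin /=; case/andP: (hinit x xin) => a b; case/andP: hM => c _; rewrite b andbT; exact: leq_trans c a.
    - by [].
  case: (hstep t) => f1 [f2 [l1 [l2 [hl1 hl2 ->]]]].
  exists (map succ (filter keep (D zs)) ++ [:: ((f1, l1), 0); ((f2, l2), 0)]); split.
    rewrite ep /decr_rlt size_map -fstD map_cat map_fst_succ [in LHS]filter_map /D.
    by [].
  apply: step => //; lia.
move=> t ht; case: (ex t) => zs [-> iv]; rewrite size_map; exact: final iv ht.
Qed.
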